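(* Let $B$ be a Horn program, $E^+,E^-$ finite sets of ground atoms, and $H_1,H_2,H_3\in\mathcal{H}_{D,C}$ hypotheses with $H_3$ a specialization of $H_1$. If $S_{MDL}(H_2,B,E^+,E^-) - S_{MDL}(H_1,B,E^+,E^-) > fp(H_1,B,E^-) - (size(H_3)-size(H_1))$, then $S_{MDL}(H_2,B,E^+,E^-) > S_{MDL}(H_3,B,E^+,E^-)$.
   Context: A definite clause is a clause with exactly one positive literal. A hypothesis is a finite set of definite clauses; $\mathcal{H}_{D,C}$ denotes the hypothesis space of hypotheses consistent with a declaration bias $D$ and hypothesis constraints $C$ (only membership matters). $size(H)$ is the total number of literals in $H$. $B$ is background knowledge, $E^+$ positive and $E^-$ negative examples. For a hypothesis $H$: $tp(H,B,E^+)=|\{e\in E^+ : H\cup B\models e\}|$, $tn(H,B,E^-)=|\{e\in E^- : H\cup B\not\models e\}|$, $fp(H,B,E^-)=|E^-|-tn(H,B,E^-)$, and $S_{MDL}(H,B,E^+,E^-)=tp(H,B,E^+)+tn(H,B,E^-)-size(H)$. A clause $C_1$ subsumes a clause $C_2$ iff there is a substitution $\theta$ with $C_1\theta\subseteq C_2$. A clausal theory $T_1$ subsumes $T_2$ ($T_1\preceq T_2$) iff every clause of $T_2$ is subsumed by some clause of $T_1$. $T_1$ is a generalization of $T_2$ iff $T_1\preceq T_2$, and a specialization of $T_2$ iff $T_2\preceq T_1$. *)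

(* Defs.v *)
From Stdlib Require Import List ZArith ClassicalEpsilon.
Import ListNotations.

Inductive term : Type :=
| Var : nat -> term
| Fn : nat -> list term -> term.

Definition atom : Type := (nat * list term)%type.

Inductive literal : Type :=
| Pos : atom -> literal
| Neg : atom -> literal.

(** A clause is a finite set of literals, represented by a duplicate-free
    list; a clausal theory is a finite set of clauses (list). *)
Definition clause : Type := list literal.
Definition theory : Type := list clause.

Fixpoint ground_term (t : term) : Prop :=
  match t with
  | Var _ => False
  | Fn _ args =>
      (fix g (l : list term) : Prop :=
         match l with nil => True | t' :: l' => ground_term t' /\ g l' end) args
  end.

Definition ground_atom (a : atom) : Prop := Forall ground_term (snd a).

Definition is_pos (l : literal) : bool :=
  match l with Pos _ => true | Neg _ => false end.

Definition num_pos (C : clause) : nat := length (filter is_pos C).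

Definition definite_clause (C : clause) : Prop := NoDup C /\ num_pos C = 1%nat.
Definition horn_clause (C : clause) : Prop := NoDup C /\ (num_pos C <= 1)%nat.

(** A finite set of clauses: no two listed clauses denote the same set. *)
Definition set_like (T : theory) : Prop :=
  NoDup T /\
  forall C D, In C T -> In D T -> (forall l, In l C <-> In l D) -> C = D.

Definition hypothesis_wf (H : theory) : Prop :=
  set_like H /\ Forall definite_clause H.

Definition horn_program (B : theory) : Prop :=
  set_like B /\ Forall horn_clause B.

Definition size (H : theory) : nat := fold_right (fun C n => length C + n)%nat 0%nat H.

Fixpoint subst_term (th : nat -> term) (t : term) : term :=
  match t with
  | Var n => th n
  | Fn f args => Fn f (map (subst_term th) args)
  end.

Definition subst_atom (th : nat -> term) (a : atom) : atom :=
  (fst a, map (subst_term th) (snd a)).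

Definition subst_lit (th : nat -> term) (l : literal) : literal :=
  match l with
  | Pos a => Pos (subst_atom th a)
  | Neg a => Neg (subst_atom th a)
  end.

Definition clause_subsumes (C1 C2 : clause) : Prop :=
  exists th : nat -> term, forall l, In l C1 -> In (subst_lit th l) C2.

Definition theory_subsumes (T1 T2 : theory) : Prop :=
  forall C2, In C2 T2 -> exists C1, In C1 T1 /\ clause_subsumes C1 C2.

Definition specialization (T2 T1 : theory) : Prop := theory_subsumes T1 T2.

Record structure : Type := {
  dom : Type;
  dom_inhabited : dom;
  fint : nat -> list dom -> dom;
  pint : nat -> list dom -> Prop
}.

Fixpoint teval (M : structure) (s : nat -> dom M) (t : term) : dom M :=
  match t with
  | Var n => s n
  | Fn f args => fint M f (map (teval M s) args)
  end.

Definition atom_holds (M : structure) (s : nat -> dom M) (a : atom) : Prop :=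
  pint M (fst a) (map (teval M s) (snd a)).

Definition lit_holds (M : structure) (s : nat -> dom M) (l : literal) : Prop :=
  match l with
  | Pos a => atom_holds M s a
  | Neg a => ~ atom_holds M s a
  end.

Definition clause_true (M : structure) (C : clause) : Prop :=
  forall s : nat -> dom M, exists l, In l C /\ lit_holds M s l.

Definition is_model (M : structure) (T : theory) : Prop :=
  forall C, In C T -> clause_true M C.

Definition entails (T : theory) (e : atom) : Prop :=
  forall M : structure, is_model M T -> forall s : nat -> dom M, atom_holds M s e.

Definition countP {A : Type} (P : A -> Prop) (l : list A) : nat :=
  length (filter (fun x => if excluded_middle_informative (P x) then true else false) l).

Definition tp (H B : theory) (Ep : list atom) : nat :=
  countP (fun e => entails (H ++ B) e) Ep.

Definition tn (H B : theory) (En : list atom) : nat :=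
  countP (fun e => ~ entails (H ++ B) e) En.

Definition fp (H B : theory) (En : list atom) : Z :=
  (Z.of_nat (length En) - Z.of_nat (tn H B En))%Z.

Definition S_MDL (H B : theory) (Ep En : list atom) : Z :=
  (Z.of_nat (tp H B Ep) + Z.of_nat (tn H B En) - Z.of_nat (size H))%Z.

Definition ground_examples (E : list atom) : Prop := NoDup E /\ Forall ground_atom E.

(* Main.v *)
Require Import Defs.
From Stdlib Require Import List ZArith Lia ClassicalEpsilon.
Import ListNotations.

Fixpoint teval_subst (M : structure) (s : nat -> dom M) (th : nat -> term) (t : term) {struct t} :
  teval M s (subst_term th t) = teval M (fun n => teval M s (th n)) t.
Proof.
  destruct t as [n | f args]; simpl.
  - reflexivity.
  - f_equal. rewrite map_map.
    induction args as [|a l IH]; simpl.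
    + reflexivity.
    + rewrite (teval_subst M s th a). f_equal. exact IH.
Qed.

Lemma lit_subst M s th l :
  lit_holds M s (subst_lit th l) <-> lit_holds M (fun n => teval M s (th n)) l.
Proof.
  assert (HA : forall a, atom_holds M s (subst_atom th a) <->
                     atom_holds M (fun n => teval M s (th n)) a).
  { intros [p args]. unfold atom_holds, subst_atom; simpl.
    rewrite map_map. replace (map (fun x => teval M s (subst_term th x)) args)
      with (map (teval M (fun n => teval M s (th n))) args). tauto.
    apply map_ext. intros; symmetry; apply teval_subst. }
  destruct l; simpl; specialize (HA a); tauto.
Qed.

Lemma model_spec M H1 H3 B :
  specialization H3 H1 -> is_model M (H1 ++ B) -> is_model M (H3 ++ B).
Proof.
  intros Hs Hm C HC. apply in_app_or in HC as [HC|HC].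
  - destruct (Hs C HC) as [C1 [HC1 [th Hth]]].
    intros s. destruct (Hm C1 (in_or_app _ _ _ (or_introl HC1)) (fun n => teval M s (th n)))
      as [l [Hl Hls]].
    exists (subst_lit th l). split; [apply Hth; exact Hl|]. apply lit_subst; exact Hls.
  - apply Hm. apply in_or_app; right; exact HC.
Qed.

Lemma countP_mono {A} (P Q : A -> Prop) l :
  (forall x, P x -> Q x) -> countP P l <= countP Q l.
Proof.
  intros HPQ. unfold countP. induction l as [|a l IH]; simpl; [lia|].
  destruct (excluded_middle_informative (P a)) as [p|p];
  destruct (excluded_middle_informative (Q a)) as [q|q]; simpl; try lia.
  exfalso; auto.
Qed.

Lemma countP_le {A} (P : A -> Prop) l : countP P l <= length l.
Proof. unfold countP. apply filter_length_le. Qed.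

(* HS models the hypothesis space H_{D,C} (only membership matters). *)
Theorem proposition4p11
  (HS : theory -> Prop) (B : theory) (Ep En : list atom) (H1 H2 H3 : theory) :
  horn_program B ->
  ground_examples Ep -> ground_examples En ->
  HS H1 -> HS H2 -> HS H3 ->
  hypothesis_wf H1 -> hypothesis_wf H2 -> hypothesis_wf H3 ->
  specialization H3 H1 ->
  (S_MDL H2 B Ep En - S_MDL H1 B Ep En >
     fp H1 B En - (Z.of_nat (size H3) - Z.of_nat (size H1)))%Z ->
  (S_MDL H2 B Ep En > S_MDL H3 B Ep En)%Z.
Proof.
  intros _ _ _ _ _ _ _ _ _ Hs Hgt.
  assert (T : tp H3 B Ep <= tp H1 B Ep).
  { unfold tp. apply countP_mono. intros e He M Hm s.
    apply He. eapply model_spec; eauto. }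
  assert (N : tn H3 B En <= length En) by apply countP_le.
  unfold S_MDL, fp in *. lia.
Qed.
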